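(* Let $(\{0,1\}^{\mathbb N},\mathbb B_\Pi,m,\sigma)$ be an ergodic Markov shift over two symbols, $X$ a lexicographic-like random variable, $d\in\mathbb N$, $O=\bigcup_{n=0}^\infty\sigma^{-n}(\{\overline0\})$ with $\overline0=(0,0,\dots)$, and $\widetilde{\mathcal P}^X(d)=\{P\setminus O\mid P\in\mathcal P^X(d)\}\cup\{O\}$. Then for every $P\in\widetilde{\mathcal P}^X(d)\setminus\{O\}$ there are $a_0,\dots,a_{d-1}\in\{0,1\}$ with $P\subseteq C_{a_0a_1\dots a_{d-1}}$.
   Context: Markov shift over $\{0,1\}$: given a $2\times2$ stochastic matrix $Q=(q_{ij})$ and a stationary probability vector $p$ with positive entries, the system on one-sided sequences $s=(s_0,s_1,\dots)\in\{0,1\}^{\mathbb N}$ with $\sigma$-algebra $\mathbb B_\Pi$ generated by cylinders $C_{a_0\dots a_{n-1}}=\{s:s_i=a_i,i<n\}$, shift $(\sigma s)_j=s_{j+1}$ and $m(C_{a_0\dots a_{n-1}})=p_{a_0}q_{a_0a_1}\cdots q_{a_{n-2}a_{n-1}}$; ergodic means every $\sigma$-invariant set has measure $0$ or $1$. Lexicographic order: $r\prec s$ iff $r_0<s_0$ or there is $k\in\mathbb N$ with $r_i=s_i$ for $i<k$ and $r_k<s_k$. $X$ is lexicographic-like if it is injective on a set of full $m$-measure and for all $s$ and $j,n\in\mathbb N_0$: $X(\sigma^j s)\le X(\sigma^n s)$ iff $\sigma^j s\preceq\sigma^n s$. Ordinal pattern: $(x_0,\dots,x_d)$ has pattern $\pi=(r_0,\dots,r_d)\in\Pi_d$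 (permutations of $\{0,\dots,d\}$) if $x_{r_0}\ge\dots\ge x_{r_d}$ and $r_{l-1}>r_l$ whenever $x_{r_{l-1}}=x_{r_l}$. The ordinal partition $\mathcal P^X(d)$ consists of the sets $P_\pi=\{s:(X(\sigma^d s),\dots,X(\sigma s),X(s))\text{ has ordinal pattern }\pi\}$, $\pi\in\Pi_d$. *)

(* Defs.v *)
(* Markov shifts over {0,1} (false = 0, true = 1). *)
From Stdlib Require Import Reals List Permutation.
Import ListNotations.
Open Scope R_scope.

Definition seqs := nat -> bool.

Definition shift (s : seqs) : seqs := fun j => s (S j).
Fixpoint shiftn (n : nat) (s : seqs) : seqs :=
  match n with O => s | S k => shift (shiftn k s) end.

Definition cylinder (a : list bool) (s : seqs) : Prop :=
  forall i, (i < length a)%nat -> s i = nth i a false.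

Inductive measurable : (seqs -> Prop) -> Prop :=
| meas_cyl : forall a, measurable (cylinder a)
| meas_compl : forall A, measurable A -> measurable (fun s => ~ A s)
| meas_union : forall A : nat -> seqs -> Prop,
    (forall n, measurable (A n)) -> measurable (fun s => exists n, A n s)
| meas_ext : forall A B, measurable A -> (forall s, A s <-> B s) -> measurable B.

Fixpoint trans_weight (Q : bool -> bool -> R) (a0 : bool) (l : list bool) : R :=
  match l with
  | [] => 1
  | b :: l' => Q a0 b * trans_weight Q b l'
  end.
Definition cyl_weight (p : bool -> R) (Q : bool -> bool -> R) (a : list bool) : R :=
  match a with
  | [] => 1
  | a0 :: l => p a0 * trans_weight Q a0 l
  end.

Definition stochastic (Q : bool -> bool -> R) : Prop :=
  (forall i j, 0 <= Q i j) /\ (forall i, Q i false + Q i true = 1).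

Definition stationary_pos (p : bool -> R) (Q : bool -> bool -> R) : Prop :=
  (forall i, 0 < p i) /\ p false + p true = 1 /\
  (forall j, p j = p false * Q false j + p true * Q true j).

(* mu is a (countably additive) probability measure on B_Pi which agrees with the
   Markov formula on cylinders; by Caratheodory such a measure exists and is unique,
   so mu is the Markov measure m. *)
Definition markov_measure (p : bool -> R) (Q : bool -> bool -> R)
    (mu : (seqs -> Prop) -> R) : Prop :=
  (forall A, measurable A -> 0 <= mu A) /\
  (forall A : nat -> seqs -> Prop,
     (forall n, measurable (A n)) ->
     (forall n k s, n <> k -> A n s -> A k s -> False) ->
     infinite_sum (fun n => mu (A n)) (mu (fun s => exists n, A n s))) /\
  (forall a, mu (cylinder a) = cyl_weight p Q a).

Definition ergodic (mu : (seqs -> Prop) -> R) : Prop :=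
  forall A, measurable A -> (forall s, A (shift s) <-> A s) -> mu A = 0 \/ mu A = 1.

Definition lex_lt (r s : seqs) : Prop :=
  exists k, (forall i, (i < k)%nat -> r i = s i) /\ r k = false /\ s k = true.
Definition lex_le (r s : seqs) : Prop := lex_lt r s \/ r = s.

Definition random_variable (X : seqs -> R) : Prop :=
  forall t, measurable (fun s => X s <= t).

Definition lexicographic_like (mu : (seqs -> Prop) -> R) (X : seqs -> R) : Prop :=
  (exists A, measurable A /\ mu A = 1 /\
     (forall s t, A s -> A t -> X s = X t -> s = t)) /\
  (forall s j n, X (shiftn j s) <= X (shiftn n s) <-> lex_le (shiftn j s) (shiftn n s)).

Definition is_perm (d : nat) (r : list nat) : Prop := Permutation r (seq 0 (S d)).

Definition has_pattern (d : nat) (x : nat -> R) (r : list nat) : Prop :=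
  forall l, (1 <= l <= d)%nat ->
    x (nth (l - 1) r 0%nat) >= x (nth l r 0%nat) /\
    (x (nth (l - 1) r 0%nat) = x (nth l r 0%nat) ->
       (nth (l - 1) r 0%nat > nth l r 0%nat)%nat).

(* P_pi: (X(sigma^d s), ..., X(sigma s), X(s)) has pattern pi, i.e. x_i = X(sigma^(d-i) s) *)
Definition P_pat (X : seqs -> R) (d : nat) (r : list nat) (s : seqs) : Prop :=
  has_pattern d (fun i => X (shiftn (d - i) s)) r.

Definition Oset (s : seqs) : Prop :=
  exists n, forall j, shiftn n s j = false.

Definition P_tilde (X : seqs -> R) (d : nat) (r : list nat) (s : seqs) : Prop :=
  P_pat X d r s /\ ~ Oset s.

(* Main.v *)
Require Import Defs.
From Stdlib Require Import Reals List.
From Stdlib Require Import Arith Lra Lia Permutation Classical FunctionalExtensionality.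
Import ListNotations.
Open Scope R_scope.

Lemma shiftn_app n s j : shiftn n s j = s (n + j)%nat.
Proof.
  revert j; induction n; intro j; simpl; auto.
  unfold shift. rewrite IHn. f_equal. lia.
Qed.

Lemma min_ex (P : nat -> bool) :
  (exists j, P j = true) -> exists m, P m = true /\ forall i, (i < m)%nat -> P i = false.
Proof.
  intros [j Hj].
  assert (H : forall n j, (j <= n)%nat -> P j = true ->
    exists m, P m = true /\ forall i, (i < m)%nat -> P i = false).
  { induction n; intros j0 Hj0 Pj0.
    - exists j0; split; auto. intros; lia.
    - destruct (P 0%nat) eqn:E.
      + exists 0%nat; split; auto; intros; lia.
      + destruct (le_lt_dec j0 n).
        * apply (IHn j0); auto.
        *
          destruct (classic (exists i, (i <= n)%nat /\ P i = true)) as [[i [Hi Pi]]|Hn].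
          -- apply (IHn i); auto.
          -- exists j0; split; auto. intros i Hi.
             destruct (P i) eqn:Ei; auto. exfalso; apply Hn; exists i; split; auto; lia. }
  apply (H j j); auto.
Qed.

Lemma lex_asym a b : lex_lt a b -> lex_le b a -> False.
Proof.
  intros [k1 [H1 [H1a H1b]]] [[k2 [H2 [H2a H2b]]]|E].
  - destruct (lt_eq_lt_dec k1 k2) as [[L|L]|L].
    + specialize (H2 k1 L). congruence.
    + subst. congruence.
    + specialize (H1 k2 L). congruence.
  - subst. congruence.
Qed.

Lemma lex_zero u : u 0%nat = false -> (exists j, u j = true) -> lex_lt u (shift u).
Proof.
  intros H0 Hex. destruct (min_ex u Hex) as [m [Hm Hmin]].
  destruct m. congruence.
  exists m. split; [|split].
  - intros i Hi. unfold shift. rewrite !Hmin by lia. auto.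
  - apply Hmin; lia.
  - unfold shift. auto.
Qed.

Lemma lex_one u : u 0%nat = true -> lex_le (shift u) u.
Proof.
  intros H0. destruct (classic (exists j, negb (u j) = true)) as [Hex|Hn].
  - left. destruct (min_ex _ Hex) as [m [Hm Hmin]].
    destruct m. rewrite H0 in Hm; discriminate.
    exists m. split; [|split].
    + intros i Hi. unfold shift.
      pose proof (Hmin i ltac:(lia)). pose proof (Hmin (S i) ltac:(lia)).
      destruct (u i), (u (S i)); simpl in *; congruence.
    + unfold shift. destruct (u (S m)); simpl in *; congruence.
    + pose proof (Hmin m ltac:(lia)). destruct (u m); simpl in *; congruence.
  - right. extensionality j. unfold shift.
    assert (forall j, u j = true).
    { intro j0. destruct (u j0) eqn:E; auto. exfalso; apply Hn; exists j0; rewrite E; auto. }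
    rewrite !H; auto.
Qed.

Lemma key_lex (X : seqs -> R) s k :
  (forall s j n, X (shiftn j s) <= X (shiftn n s) <-> lex_le (shiftn j s) (shiftn n s)) ->
  ~ Oset s ->
  (s k = false <-> X (shiftn k s) < X (shiftn (S k) s)).
Proof.
  intros HX HO. split.
  - intro Hk. assert (Hl : lex_lt (shiftn k s) (shiftn (S k) s)).
    { simpl. apply lex_zero.
      + rewrite shiftn_app. rewrite Nat.add_0_r. auto.
      + apply NNPP. intro Hn. apply HO. exists k. intro j.
        destruct (shiftn k s j) eqn:E; auto. exfalso; apply Hn; exists j; auto. }
    destruct (Rlt_or_le (X (shiftn k s)) (X (shiftn (S k) s))) as [L|L]; auto.
    exfalso. apply (lex_asym _ _ Hl). apply (proj1 (HX s (S k) k)); auto.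
  - intro L. destruct (s k) eqn:Hk; auto. exfalso.
    assert (Hl : lex_le (shiftn (S k) s) (shiftn k s)).
    { simpl. apply lex_one. rewrite shiftn_app. rewrite Nat.add_0_r. auto. }
    apply (proj2 (HX s (S k) k)) in Hl. lra.
Qed.

Lemma chain d (x : nat -> R) r : has_pattern d x r -> length r = S d ->
  forall p q, (p < q)%nat -> (q < S d)%nat ->
  x (nth p r 0%nat) >= x (nth q r 0%nat) /\
  (x (nth p r 0%nat) = x (nth q r 0%nat) -> (nth p r 0%nat > nth q r 0%nat)%nat).
Proof.
  intros Hp Hl p q Hpq. induction Hpq; intro Hq.
  - specialize (Hp (S p) ltac:(lia)). replace (S p - 1)%nat with p in Hp by lia. auto.
  - destruct (IHHpq ltac:(lia)) as [A B].
    specialize (Hp (S m) ltac:(lia)). replace (S m - 1)%nat with m in Hp by lia.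
    destruct Hp as [C D]. split; [lra|].
    intro E. assert (E1 : x (nth p r 0%nat) = x (nth m r 0%nat)) by lra.
    assert (E2 : x (nth m r 0%nat) = x (nth (S m) r 0%nat)) by lra.
    specialize (B E1). specialize (D E2). lia.
Qed.

Lemma pos_of d r i : is_perm d r -> (i <= d)%nat ->
  exists p, (p < S d)%nat /\ nth p r 0%nat = i.
Proof.
  intros Hr Hi. unfold is_perm in Hr.
  assert (In i r).
  { apply Permutation_in with (seq 0 (S d)). symmetry; auto. apply in_seq. lia. }
  destruct (In_nth r i 0%nat H) as [p [Hp1 Hp2]].
  rewrite (Permutation_length Hr), length_seq in Hp1. eauto.
Qed.

Lemma transfer d r (x y : nat -> R) i j :
  is_perm d r -> has_pattern d x r -> has_pattern d y r ->
  (j < i)%nat -> (i <= d)%nat -> x i < x j -> y i < y j.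
Proof.
  intros Hr Hx Hy Hji Hid L.
  assert (Hl : length r = S d) by (rewrite (Permutation_length Hr), length_seq; auto).
  destruct (pos_of d r i Hr Hid) as [p [Hp Ep]].
  destruct (pos_of d r j Hr ltac:(lia)) as [q [Hq Eq]].
  destruct (lt_eq_lt_dec p q) as [[L2|L2]|L2].
  - destruct (chain d x r Hx Hl p q L2 Hq) as [A _]. rewrite Ep, Eq in A. lra.
  - subst. lia.
  - destruct (chain d y r Hy Hl q p L2 Hp) as [A B]. rewrite Ep, Eq in A, B.
    destruct (Rle_lt_or_eq_dec (y i) (y j)); try lra. specialize (B (eq_sym e)). lia.
Qed.

Lemma agree_false (X : seqs -> R) d r s t k :
  (forall s j n, X (shiftn j s) <= X (shiftn n s) <-> lex_le (shiftn j s) (shiftn n s)) ->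
  is_perm d r -> P_tilde X d r s -> P_tilde X d r t -> (k < d)%nat ->
  s k = false -> t k = false.
Proof.
  intros HX Hr [Ps Os] [Pt Ot] Hk Hs.
  apply (key_lex X s k HX Os) in Hs. apply (key_lex X t k HX Ot).
  unfold P_pat in *.
  pose proof (transfer d r _ _ (d - k) (d - S k) Hr Ps Pt ltac:(lia) ltac:(lia)) as T. cbv beta in T.
  replace (d - (d - k))%nat with k in T by lia.
  replace (d - (d - S k))%nat with (S k) in T by lia.
  auto.
Qed.

Theorem lemma7 (p : bool -> R) (Q : bool -> bool -> R) (mu : (seqs -> Prop) -> R)
  (X : seqs -> R) (d : nat)
  (HQ : stochastic Q) (Hp : stationary_pos p Q) (Hmu : markov_measure p Q mu)
  (Herg : ergodic mu) (HXrv : random_variable X) (HX : lexicographic_like mu X)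
  (Hd : (1 <= d)%nat) :
  forall (pi : list nat), is_perm d pi ->
    ~ (forall s, P_tilde X d pi s <-> Oset s) ->
    exists a : list bool, length a = d /\
      (forall s, P_tilde X d pi s -> cylinder a s).
Proof.
  intros pi Hpi _. destruct HX as [_ HX].
  destruct (classic (exists s0, P_tilde X d pi s0)) as [[s0 H0]|Hn].
  - exists (map s0 (seq 0 d)). split.
    + rewrite length_map, length_seq; auto.
    + intros s Hs i Hi. rewrite length_map, length_seq in Hi.
      rewrite (nth_indep _ false (s0 0%nat)) by (rewrite length_map, length_seq; auto).
      rewrite map_nth, seq_nth by auto. simpl.
      destruct (s i) eqn:E1, (s0 i) eqn:E2; auto.
      * rewrite (agree_false X d pi s0 s i HX Hpi H0 Hs Hi E2) in E1. discriminate.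
      * rewrite (agree_false X d pi s s0 i HX Hpi Hs H0 Hi E1) in E2. discriminate.
  - exists (repeat false d). split.
    + apply repeat_length.
    + intros s Hs. exfalso; apply Hn; eauto.
Qed.
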